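(* Let $q$ be a prime power with $q\equiv \pm1\pmod 5$, let $b\in\mathbb{F}_q$ be a root of $x^2+x-1$, let $\alpha\in\mathbb{F}_{q^5}$ be normal over $\mathbb{F}_q$, and let $f=x^2-bx+1$. Then $L_f(\alpha)+a$ is $2$-normal over $\mathbb{F}_q$ for every $a\in\mathbb{F}_q$ with the exception of at most one value of $a$.
   Context: For $h(x)=\sum_i a_ix^i\in\mathbb{F}_q[x]$, $L_h(\alpha)=\sum_i a_i\alpha^{q^i}$ for $\alpha\in\mathbb{F}_{q^5}$. An element $\alpha\in\mathbb{F}_{q^n}$ is normal over $\mathbb{F}_q$ if $\alpha,\alpha^q,\dots,\alpha^{q^{n-1}}$ form an $\mathbb{F}_q$-basis of $\mathbb{F}_{q^n}$. For $\alpha\in\mathbb{F}_{q^n}$ let $g_\alpha(x)=\sum_{i=0}^{n-1}\alpha^{q^i}x^{n-1-i}$; $\alpha$ is $k$-normal over $\mathbb{F}_q$ if $\gcd(x^n-1,g_\alpha(x))$ in $\mathbb{F}_{q^n}[x]$ has degree $k$ (here $n=5$). *)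

(* Defs.v *)
From HB Require Import structures.
From mathcomp Require Import all_boot all_order all_algebra all_field.
Set Implicit Arguments. Unset Strict Implicit. Unset Printing Implicit Defensive.
Import GRing.Theory.
Local Open Scope ring_scope.

(* F plays the role of F_q (q = #|F|), L is an extension field of F with
   [L : F] = n (here n = 5), i.e. L = F_{q^n}. *)

Definition frobq (F : finFieldType) (L : fieldExtType F) (i : nat) (x : L) : L :=
  x ^+ (#|F| ^ i).

Definition Lpoly (F : finFieldType) (L : fieldExtType F) (h : {poly F}) (x : L) : L :=
  \sum_(i < size h) h`_i *: frobq i x.

Definition normal_elt (F : finFieldType) (L : fieldExtType F) (x : L) : bool :=
  basis_of fullv [seq frobq i x | i <- iota 0 (\dim {:L})].

Definition g_poly (F : finFieldType) (L : fieldExtType F) (x : L) : {poly L} :=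
  \sum_(i < \dim {:L}) (frobq i x)%:P * 'X^(\dim {:L} - 1 - i).

Definition k_normal (F : finFieldType) (L : fieldExtType F) (k : nat) (x : L) : bool :=
  (size (gcdp ('X^(\dim {:L}) - 1) (g_poly x))).-1 == k.

(* Main.v *)
Require Import Defs.
From HB Require Import structures.
From mathcomp Require Import all_boot all_order all_algebra all_field.
From mathcomp Require Import ring zify.
Import GRing.Theory.
Local Open Scope ring_scope.

Section Frob.
Variables (F : finFieldType) (L : fieldExtType F).

Lemma frobq_add k (x y : L) : frobq k (x + y) = frobq k x + frobq k y.
Proof.
rewrite /frobq; have [p pp pcharFp] := finPcharP F.
have := card_pprimeChar pcharFp => /= ->.
rewrite -expnM; apply: exprDn_pchar.
have pL : p \in [char L] by rewrite (pchar_lalg L).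
rewrite pnatX; apply/orP; left.
by apply: sub_in_pnat (pnat_id pp) => r _; rewrite inE => /eqP ->.
Qed.

Lemma frobq_alg k (c : F) : frobq k (c%:A : L) = c%:A.
Proof.
rewrite /frobq; elim: k => [|k IH]; first by rewrite expn0 expr1.
by rewrite expnSr exprM IH -in_algE -rmorphXn expf_card.
Qed.

Lemma frobqMul k (x y : L) : frobq k (x * y) = frobq k x * frobq k y.
Proof. exact: exprMn. Qed.

Lemma frobq_scale k (c : F) (x : L) : frobq k (c *: x) = c *: frobq k x.
Proof. by rewrite -[c *: x]mulr_algl -[c *: frobq k x]mulr_algl frobqMul frobq_alg. Qed.

Lemma frobqM j k (x : L) : frobq j (frobq k x) = frobq (j + k) x.
Proof. by rewrite /frobq -exprM -expnD addnC. Qed.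

Lemma frobq0 k : frobq k (0 : L) = 0.
Proof.
by rewrite /frobq expr0n expn_eq0 (negbTE (lt0n_neq0 (ltnW (finNzRing_gt1 F)))).
Qed.

Lemma frobqN k (x : L) : frobq k (- x) = - frobq k x.
Proof. by apply/eqP; rewrite -subr_eq0 opprK -frobq_add addNr frobq0. Qed.

Lemma frobq_dim (x : L) : frobq (\dim {:L}) x = x.
Proof.
have := Fermat's_little_theorem (aspacef L) x.
rewrite memvf => /esym/eqP; exact.
Qed.

Lemma frobq_sum k I (r : seq I) (P : pred I) (G : I -> L) :
  frobq k (\sum_(i <- r | P i) G i) = \sum_(i <- r | P i) frobq k (G i).
Proof. exact: (big_morph _ (frobq_add k) (frobq0 k)). Qed.

End Frob.

Section Main.
Variables (F : finFieldType) (L : fieldExtType F).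

Lemma g_poly5 (hdim : \dim {:L} = 5%N) (x : L) :
  g_poly x = \sum_(i < 5) (frobq i x)%:P * 'X^(4 - i).
Proof. by rewrite /g_poly hdim. Qed.

Lemma g_coef (hdim : \dim {:L} = 5%N) (x : L) m :
  (g_poly x)`_m = if (m < 5)%N then frobq (4 - m) x else 0.
Proof.
rewrite g_poly5 // coef_sum; under eq_bigr => i _ do rewrite coefCM coefXn.
rewrite !big_ord_recr big_ord0 /=.
do 5?[case: m => [|m]; first by rewrite /= !mulr0 !mulr1 ?add0r ?addr0].
by rewrite !mulr0 !addr0.
Qed.

Lemma fold5 (P : {poly L}) : (size P <= 10)%N -> ('X^5 - 1) %| P ->
  forall r, (r < 5)%N -> P`_r + P`_(r + 5) = 0.
Proof.
move=> hs /dvdpP [Q eP] r hr.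
have nN : ('X^5 - 1 : {poly L}) != 0 by rewrite -size_poly_eq0 size_Xn_sub_1.
have hQ : (size Q <= 5)%N.
  case: (eqVneq Q 0) => [->|nz]; first by rewrite size_poly0.
  move: hs; rewrite eP size_mul // size_Xn_sub_1 // addnS /= => h.
  by rewrite -(leq_add2r 5).
rewrite eP mulrBr mulr1 !coefB !coefMXn hr ltnNge leq_addl /= addnK.
rewrite (nth_default 0 (_ : size Q <= r + 5)%N); last by apply: leq_trans hQ (leq_addl _ _).
by rewrite subr0 add0r addrC subrr.
Qed.

Lemma key_eqs (hdim : \dim {:L} = 5%N) (x : L) (H : {poly L}) :
  (size H <= 5)%N -> ('X^5 - 1) %| H * g_poly x ->
  forall j, (j < 5)%N -> \sum_(k < 5) H`_k * frobq k (frobq j x) = 0.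
Proof.
move=> hH hdiv j hj.
have hG : (size (g_poly x) <= 5)%N.
  by apply/leq_sizeP => m hm; rewrite g_coef // ltnNge hm.
have hs : (size (H * g_poly x)%R <= 10)%N.
  apply: leq_trans (size_polyMleq _ _) _.
  exact: leq_trans (leq_pred _) (leq_trans (leq_add hH hG) _).
have F0 := fold5 _ hs hdiv.
have hz : forall m, (5 <= m)%N -> H`_m = 0 by move=> m hm; apply: nth_default (leq_trans hH hm).
have g0 : (g_poly x)`_0 = frobq 4 x by rewrite g_coef.
have g1 : (g_poly x)`_1 = frobq 3 x by rewrite g_coef.
have g2 : (g_poly x)`_2 = frobq 2 x by rewrite g_coef.
have g3 : (g_poly x)`_3 = frobq 1 x by rewrite g_coef.
have g4 : (g_poly x)`_4 = frobq 0 x by rewrite g_coef.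
have g5 : (g_poly x)`_5 = 0 by rewrite g_coef.
have g6 : (g_poly x)`_6 = 0 by rewrite g_coef.
have g7 : (g_poly x)`_7 = 0 by rewrite g_coef.
have g8 : (g_poly x)`_8 = 0 by rewrite g_coef.
have g9 : (g_poly x)`_9 = 0 by rewrite g_coef.
have h5 : H`_5 = 0 by apply: hz.
have h6 : H`_6 = 0 by apply: hz.
have h7 : H`_7 = 0 by apply: hz.
have h8 : H`_8 = 0 by apply: hz.
have h9 : H`_9 = 0 by apply: hz.
have p5 : frobq 5 x = frobq 0 x by rewrite -hdim frobq_dim.
have p6 : frobq 6 x = frobq 1 x by rewrite -[6%N]/(1 + 5)%N -frobqM -hdim frobq_dim.
have p7 : frobq 7 x = frobq 2 x by rewrite -[7%N]/(2 + 5)%N -frobqM -hdim frobq_dim.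
have p8 : frobq 8 x = frobq 3 x by rewrite -[8%N]/(3 + 5)%N -frobqM -hdim frobq_dim.
rewrite !big_ord_recr big_ord0 /= !frobqM.
do 5?[case: j hj => [|j] hj]; last by [].
all: move: hj => _.
1: have := F0 4 isT.
2: have := F0 3 isT.
3: have := F0 2 isT.
4: have := F0 1 isT.
5: have := F0 0 isT.
all: rewrite !coefM !big_ord_recr !big_ord0 /=.
all: rewrite ?g0 ?g1 ?g2 ?g3 ?g4 ?g5 ?g6 ?g7 ?g8 ?g9 ?h5 ?h6 ?h7 ?h8 ?h9 ?p5 ?p6 ?p7 ?p8.
all: set y0 := frobq 0 x; set y1 := frobq 1 x; set y2 := frobq 2 x; set y3 := frobq 3 x; set y4 := frobq 4 x.
all: move=> E; rewrite -[RHS]E.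
all: ring.
Qed.

Lemma normal_coprime (hdim : \dim {:L} = 5%N) (x : L) :
  normal_elt x -> coprimep ('X^5 - 1) (g_poly x).
Proof.
move=> hx; apply: contraT => nc.
set N : {poly L} := 'X^5 - 1; set G := g_poly x; set d := gcdp N G.
have nN : N != 0 by rewrite -size_poly_eq0 size_Xn_sub_1.
have dnz : d != 0 by rewrite gcdp_eq0 negb_and nN.
have hd1 : size d != 1%N by move: nc; rewrite coprimep_def.
have hd : (1 < size d)%N by rewrite ltn_neqAle eq_sym hd1 lt0n size_poly_eq0 dnz.
set H := N %/ d.
have eN : H * d = N := divpK (dvdp_gcdl N G).
have eG : G %/ d * d = G := divpK (dvdp_gcdr N G).
have Hnz : H != 0 by apply/eqP => H0; move: nN; rewrite -eN H0 mul0r eqxx.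
have hH : (size H <= 5)%N.
  have := congr1 (fun p : {poly L} => size p) eN; rewrite /=; rewrite size_mul // size_Xn_sub_1 //.
  case E: (size H + size d)%N => [|m] //= e.
  by rewrite -(leq_add2r (size d)) E e -[7%N]/(5 + 2)%N leq_add2l.
have hdiv : N %| H * G by rewrite -eG mulrCA eN dvdp_mull // dvdpp.
have K := key_eqs hdim _ _ hH hdiv.
have phi0 : forall y : L, \sum_(k < 5) H`_k * frobq k y = 0.
  move=> y; set s := [seq frobq i x | i <- iota 0 (\dim {:L})].
  have hs : size s = 5%N by rewrite size_map size_iota.
  have E := coord_basis (X := in_tuple s) hx (memvf y).
  rewrite {1}E.
  under eq_bigr => k _ do rewrite frobq_sum mulr_sumr.
  rewrite exchange_big /=; apply: big1 => i _.
  have hi : (i < 5)%N by rewrite -hs.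
  rewrite (nth_map 0%N) ?size_iota ?hdim // nth_iota ?hdim // add0n.
  under eq_bigr => k _ do rewrite frobq_scale -scalerAr.
  by rewrite -scaler_sumr K // scaler0.
pose P : {poly L} := \sum_(k < 5) H`_k *: 'X^(#|F| ^ k).
have q1 : (1 < #|F|)%N := finNzRing_gt1 F.
have rootP : forall y, root P y.
  move=> y; rewrite /root /P horner_sum.
  under eq_bigr => k _ do rewrite hornerZ hornerXn.
  exact/eqP/(phi0 y).
have Pnz : P != 0.
  pose k := (size H).-1.
  have s0 : (0 < size H)%N by rewrite size_poly_gt0.
  have hk : (k < 5)%N by rewrite /k; case: (size H) s0 hH.
  have cP : P`_(#|F| ^ k) = H`_k.
    rewrite /P coef_sum (bigD1 (Ordinal hk)) //= coefZ coefXn eqxx mulr1.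
    rewrite big1 ?addr0 // => i ni.
    have ki : (k == i) = false.
      apply/negbTE; apply: contra ni => /eqP e; apply/eqP/val_inj; by rewrite /= e.
    by rewrite coefZ coefXn eqn_exp2l // ki mulr0.
  apply/eqP => P0; move: cP; rewrite P0 coef0 => /esym/eqP.
  by rewrite /k -/(lead_coef H) lead_coef_eq0 (negbTE Hnz).
have sP : (size P <= #|F| ^ 4 + 1)%N.
  apply: leq_trans (size_sum _ _ _) _; apply/bigmax_leqP => i _.
  apply: leq_trans (size_scale_leq _ _) _.
  by rewrite size_polyXn addn1 ltnS leq_exp2l // -ltnS.
have cardL : #|finvect_type L| = (#|F| ^ 5)%N.
  rewrite -hdim; have := card_vspace (fullv : {vspace finvect_type L}).
  by move=> <-; apply: eq_card => y; rewrite memvf.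
have aR : all (root P) (enum (finvect_type L)) by apply/allP => y _; exact: rootP.
have := @max_poly_roots L P (enum (finvect_type L)) Pnz aR (enum_uniq _).
move=> h; have {}h : (#|F| ^ 5 < size P)%N.
  by rewrite -cardL cardE; exact: h.
have : (#|F| ^ 5 < #|F| ^ 4 + 1)%N := leq_trans h sP.
rewrite ltnNge (expnSr _ 4); set t := (#|F| ^ 4)%N.
have -> // : (t + 1 <= t * #|F|)%N.
apply: leq_trans (_ : t + 1 <= t * 2)%N (leq_mul (leqnn t) q1).
by rewrite muln2 -addnn leq_add2l expn_gt0 ltnW.
Qed.
End Main.

Theorem lemma6p14 (F : finFieldType) (L : fieldExtType F)
  (hdim : \dim {:L} = 5%N)
  (hq : (#|F| %% 5 == 1)%N || (#|F| %% 5 == 4)%N)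
  (b : F) (hb : b ^+ 2 + b - 1 = 0)
  (alpha : L) (halpha : normal_elt alpha) :
  (#|[set a : F | ~~ k_normal 2 (Lpoly ('X^2 - b *: 'X + 1) alpha + a%:A)]| <= 1)%N.
Proof.
set f : {poly F} := 'X^2 - b *: 'X + 1.
have sf : size f = 3%N.
  rewrite /f -addrA size_addl ?size_polyXn //.
  apply: leq_ltn_trans (size_add _ _) _; rewrite size_opp gtn_max.
  rewrite (leq_ltn_trans (size_scale_leq _ _)) ?size_polyX //.
  by rewrite (leq_ltn_trans (size_polyC_leq1 _)).
have cf0 : f`_0 = 1 by rewrite /f !coefE /=; ring.
have cf1 : f`_1 = - b by rewrite /f !coefE /=; ring.
have cf2 : f`_2 = 1 by rewrite /f !coefE /=; ring.
have eLp : Lpoly f alpha = frobq 0 alpha - b%:A * frobq 1 alpha + frobq 2 alpha.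
  rewrite /Lpoly sf !big_ord_recr big_ord0 /= cf0 cf1 cf2 !scale1r scaleNr.
  by rewrite mulr_algl add0r.
have eF : forall (a : F) k, frobq k (Lpoly f alpha + a%:A) =
    frobq k alpha - b%:A * frobq (k + 1) alpha + frobq (k + 2) alpha + a%:A.
  move=> a k; rewrite eLp !frobq_add frobqN frobqMul frobq_alg !frobqM addn0.
  by rewrite frobq_alg.
have p5 : frobq 5 alpha = frobq 0 alpha by rewrite -hdim frobq_dim.
have p6 : frobq 6 alpha = frobq 1 alpha.
  by rewrite -[6%N]/(1 + 5)%N -frobqM -hdim frobq_dim.
have idt : forall a : F, g_poly (Lpoly f alpha + a%:A) =
  ('X^2 - (b%:A)%:P * 'X + 1) *
     (g_poly alpha + (a%:A)%:P * ('X^2 + (1 + b%:A)%:P * 'X + 1))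
  - ('X^5 - 1) * ((frobq 0 alpha)%:P * 'X + (frobq 1 alpha - b%:A * frobq 0 alpha)%:P)
  + ((a%:A)%:P * 'X^2) * ((b%:A) ^+ 2 + b%:A - 1)%:P.
  move=> a; rewrite !g_poly5 //; under eq_bigr => i _ do rewrite eF.
  rewrite !big_ord_recr !big_ord0 /= ?p5 ?p6.
  rewrite (_ : (4 - 0 = 4)%N) // (_ : (4 - 1 = 3)%N) // (_ : (4 - 2 = 2)%N) //.
  rewrite (_ : (4 - 3 = 1)%N) // (_ : (4 - 4 = 0)%N) //.
  rewrite !(polyCD, polyCM, polyCN, polyCB) expr0 expr1.
  set y0 := frobq 0 alpha; set y1 := frobq 1 alpha; set y2 := frobq 2 alpha.
  set y3 := frobq 3 alpha; set y4 := frobq 4 alpha.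
  ring.
have hbL : (b%:A : L) ^+ 2 + b%:A - 1 = 0.
  have := congr1 (in_alg L) hb.
  by rewrite rmorphB rmorphD rmorphXn rmorph1 rmorph0.
set fL : {poly L} := 'X^2 - (b%:A)%:P * 'X + 1 in idt *.
set gL : {poly L} := 'X^2 + (1 + b%:A)%:P * 'X + 1 in idt *.
set G := g_poly alpha in idt *.
have eN : ('X^5 - 1 : {poly L}) = fL * (('X - 1%:P) * gL).
  have : ('X^5 - 1 : {poly L}) = fL * (('X - 1%:P) * gL) +
      ('X - 1%:P) * 'X^2 * ((b%:A)^+2 + b%:A - 1)%:P.
    rewrite /fL /gL !(polyCD, polyCM, polyCN, polyCB) polyC1; ring.
  by rewrite hbL polyC0 mulr0 addr0.
have coprimeG : coprimep ('X^5 - 1) G := @normal_coprime _ _ hdim _ halpha.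
have sfL : size fL = 3%N.
  rewrite /fL mul_polyC -addrA size_addl ?size_polyXn //.
  apply: leq_ltn_trans (size_add _ _) _; rewrite size_opp gtn_max.
  rewrite (leq_ltn_trans (size_scale_leq _ _)) ?size_polyX //.
  by rewrite (leq_ltn_trans (size_polyC_leq1 _)).
have fLnz : fL != 0 by rewrite -size_poly_eq0 sfL.
have key : forall a : F, ~~ root (G + (a%:A)%:P * gL) 1 ->
    k_normal 2 (Lpoly f alpha + a%:A).
  move=> a nr; rewrite /k_normal hdim idt hbL polyC0 mulr0 addr0.
  set Ha := G + _ * gL.
  have sw : forall p q r : {poly L}, p - r * q = (- q) * r + p by move=> *; ring.
  rewrite sw (eqp_size (gcdp_addl_mul _ _ _)).
  rewrite {1}eN (eqp_size (gcdp_mul2l _ _ _)).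
  have cop : coprimep (('X - 1%:P) * gL) Ha.
    rewrite coprimepMl; apply/andP; split.
      by rewrite coprimep_sym coprimep_XsubC.
    rewrite /Ha addrC coprimep_addl_mul.
    have dg : gL %| 'X^5 - 1 by rewrite eN mulrA dvdp_mull // dvdpp.
    rewrite coprimep_sym; apply: (coprimep_dvdl dg); by rewrite coprimep_sym.
  have s1 : size (gcdp (('X - 1%:P) * gL) Ha) = 1%N by apply/eqP; rewrite -coprimep_def.
  by rewrite size_mul // ?s1 ?sfL // -size_poly_eq0 s1.
rewrite leqNgt; apply/negP => /card_gt1P [a1 [a2 [h1 h2 ne]]].
rewrite !inE in h1 h2.
have r1 := contraNT (key a1) h1.
have r2 := contraNT (key a2) h2.
rewrite /root hornerD hornerM hornerC in r1; rewrite /root hornerD hornerM hornerC in r2.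
have dX : ('X - 1%:P : {poly L}) %| 'X^5 - 1 by rewrite eN mulrCA dvdp_mulr // dvdpp.
have gnz : gL.[1] != 0.
  apply/eqP => g0; move: r1; rewrite g0 mulr0 addr0 => r1.
  have : coprimep G ('X - 1%:P).
    apply: (coprimep_dvdl dX); by rewrite coprimep_sym.
  by rewrite coprimep_XsubC /root r1.
have e : (a1%:A : L) * gL.[1] = a2%:A * gL.[1].
  by apply: (addrI G.[1]); rewrite (eqP r1) (eqP r2).
move/(mulIf gnz)/(fmorph_inj (in_alg L)): e => e.
by rewrite e eqxx in ne.
Qed.
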